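(* Let $A$ be a finite alphabet, $X\subseteq A^{\mathbb{Z}}$ a subshift, $F\colon X\to X$ a cellular automaton on $X$, and $\mu$ a Borel probability measure on $X$ which is ergodic for $\sigma$. The following are equivalent: (1) there exists a blocking word $B$ for $(X,F)$ such that $\mu([B]_0)>0$; (2) $\mu$ is equicontinuous for $(X,F)$, i.e. the set of equicontinuity points of $(X,F)$ has $\mu$-measure $1$.
   Context: $A^{\mathbb{Z}}$ has the product topology with metric $d(x,y)=2^{-i}$, $i=\min\{|j|:x_j\ne y_j\}$, and shift $\sigma((x_i)_i)=(x_{i+1})_i$. A subshift is a closed $\sigma$-invariant subset of $A^{\mathbb{Z}}$; a cellular automaton on $X$ is a continuous $F\colon X\to X$ commuting with $\sigma$; by the Curtis–Hedlund–Lyndon theorem there is an integer $r\ge 0$ (a radius) and a local map $f$ with $F(x)_i=f(x_{i-r},\dots,x_{i+r})$. For $x\in A^{\mathbb{Z}}$ and $p\le q$, $x(p,q)=x_p\cdots x_q$; for a word $u=u_1\cdots u_{|u|}$ and $t\in\mathbb{Z}$, $[u]_t=\{x\in X: x_{t+j-1}=u_j,\ 1\le j\le |u|\}$. A word $B\in A^{2k+1}$ is a blocking word for $(X,F)$ if there exist an integer $i$ with $2i+1\ge r$ and words $v_n$ of length $2i+1$ ($n\ge 1$) such that for every $x\in X$ with $x(-k,k)=B$ one has $F^n(x)(-i,i)=v_n$ for all $n\ge1$. A point $x\in X$ is an equicontinuity point of $(X,F)$ if for every $\varepsilon>0$ there is $\eta>0$ such that $d(x,y)\le\eta$ implies $d(F^i(x),F^i(y))\le\varepsilon$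 for all $i>0$. *)

(* Defs.v *)
From HB Require Import structures.
From mathcomp Require Import all_boot all_order all_algebra.
From mathcomp Require Import all_classical all_reals.
From mathcomp Require Import measure.

Set Implicit Arguments.
Unset Strict Implicit.
Unset Printing Implicit Defensive.
Import Order.TTheory GRing.Theory Num.Theory.
Local Open Scope classical_set_scope.
Local Open Scope ring_scope.

Definition config (A : pointedType) := int -> A.

Section Shift.
Variable A : pointedType.
Variable R : realType.

Definition diff_at (x y : config A) (n : nat) : bool :=
  `[< exists j : int, (`|j|%N == n) && (x j != y j) >].

(* d(x,y) = 2^{-i}, i = min{|j| : x_j <> y_j}; d(x,x) = 0 *)
Definition dist (x y : config A) : R :=
  match pselect (exists n, diff_at x y n) with
  | left H => 2 ^- (ex_minn H)
  | right _ => 0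
  end.

Definition d_open (U : set (config A)) : Prop :=
  forall x, U x -> exists2 e : R, 0 < e & forall y, dist x y < e -> U y.

Definition d_closed (X : set (config A)) : Prop := d_open (~` X).

(* Borel sets of A^Z: the sigma-algebra generated by the open sets *)
Definition borel_sets : set (set (config A)) := d_open.

Definition shift (x : config A) : config A := fun i => x (i + 1)%R.

Definition subshift (X : set (config A)) : Prop :=
  d_closed X /\ shift @` X = X.

Definition cellular_automaton (X : set (config A)) (F : config A -> config A)
  : Prop :=
  [/\ (forall x, X x -> X (F x)),
      (forall x, X x -> forall eps : R, 0 < eps ->
         exists2 eta : R, 0 < eta &
           forall y, X y -> dist x y < eta -> dist (F x) (F y) < eps) &
      (forall x, X x -> F (shift x) = shift (F x))].

Definition seg (x : config A) (p : int) (len : nat) : seq A :=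
  mkseq (fun j => x (p + j%:Z)%R) len.

Definition cylinder (X : set (config A)) (u : seq A) (t : int)
  : set (config A) :=
  [set x | X x /\ seg x t (size u) = u].

Definition is_radius (X : set (config A)) (F : config A -> config A)
  (r : nat) : Prop :=
  exists f : seq A -> A, forall x, X x -> forall i : int,
    F x i = f (seg x (i - r%:Z)%R (2 * r).+1).

Definition blocking_word (X : set (config A)) (F : config A -> config A)
  (r : nat) (B : seq A) : Prop :=
  exists k : nat, size B = (2 * k).+1 /\
  exists i : nat, (r <= (2 * i).+1)%N /\
  exists v : nat -> seq A,
    (forall n, (1 <= n)%N -> size (v n) = (2 * i).+1) /\
    forall x, X x -> seg x (- k%:Z)%R (2 * k).+1 = B ->
      forall n, (1 <= n)%N -> seg (iter n F x) (- i%:Z)%R (2 * i).+1 = v n.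

Definition equicontinuity_point (X : set (config A))
  (F : config A -> config A) (x : config A) : Prop :=
  X x /\ forall eps : R, 0 < eps ->
    exists2 eta : R, 0 < eta & forall y, X y -> dist x y <= eta ->
      forall n, (0 < n)%N -> dist (iter n F x) (iter n F y) <= eps.

End Shift.

Definition borel_space (A : pointedType) (R : realType) :=
  g_sigma_algebraType (@borel_sets A R).

Section Measure.
Variables (A : pointedType) (R : realType).
Local Notation T := (borel_space A R).

(* Borel probability measure on X (seen as a measure on A^Z carried by X),
   ergodic for sigma *)
Definition ergodic_prob_on (X : set (config A))
  (mu : {measure set T -> \bar R}) : Prop :=
  [/\ mu setT = 1%E, mu X = 1%E,
      (forall E : set T, measurable E -> mu (@shift A @^-1` E) = mu E) &
      (forall E : set T, measurable E -> @shift A @^-1` E = E ->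
         mu E = 0%E \/ mu E = 1%E)].

Definition mu_equicontinuous (X : set (config A)) (F : config A -> config A)
  (mu : {measure set T -> \bar R}) : Prop :=
  let EQ : set T := [set x | equicontinuity_point R X F x] in
  measurable EQ /\ mu EQ = 1%E.

End Measure.

(* Main.v *)
Require Import Defs.
From HB Require Import structures.
From mathcomp Require Import all_boot all_order all_algebra.
From mathcomp Require Import all_classical all_reals.
From mathcomp Require Import measure.
From mathcomp Require Import ereal topology normedtype sequences.
From mathcomp Require Import zify lra.
Set Implicit Arguments.
Unset Strict Implicit.
Unset Printing Implicit Defensive.
Import Order.TTheory GRing.Theory Num.Theory.
Local Open Scope classical_set_scope.
Local Open Scope ring_scope.

Section Basics.
Variables (A : pointedType) (R : realType).

Definition agree (K : nat) (x y : config A) :=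
  forall j : int, (`|j| <= K)%N -> x j = y j.
Definition agreeI (lo hi : int) (x y : config A) :=
  forall j : int, lo <= j <= hi -> x j = y j.

Lemma pow_le (m n : nat) : (n <= m)%N -> (2:R) ^- m <= 2 ^- n.
Proof.
move=> nm; rewrite lef_pV2 ?posrE ?exprn_gt0 //; apply: ler_weXn2l nm; by rewrite ler1n.
Qed.

Lemma pow_lt (m n : nat) : (n < m)%N -> (2:R) ^- m < 2 ^- n.
Proof.
move=> nm; rewrite ltf_pV2 ?posrE ?exprn_gt0 //; rewrite ltr_eXn2l //; by rewrite ltr1n.
Qed.

Lemma pow_gt0 (n : nat) : 0 < (2:R) ^- n.
Proof. by rewrite invr_gt0 exprn_gt0. Qed.

Lemma small_pow (eps : R) : 0 < eps -> exists n : nat, (2:R) ^- n <= eps.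
Proof.
move=> e0; have ie0 : 0 < eps^-1 by rewrite invr_gt0.
have := archi_boundP (ltW ie0).
set N := Num.Def.archi_bound _ => HN; exists N.
have h1 : (N%:R : R) <= 2 ^+ N by rewrite -natrX ler_nat ltnW // ltn_expl.
rewrite -[eps]invrK lef_pV2 ?posrE ?invr_gt0 ?exprn_gt0 //.
exact: ltW (lt_le_trans HN h1).
Qed.

Lemma dist_lt_agree K (x y : config A) : dist R x y < 2 ^- K -> agree K x y.
Proof.
move=> H j Hj; case: (eqVneq (x j) (y j)) => // Hne; exfalso.
have ex : exists n, diff_at x y n.
  by exists `|j|%N; apply/asboolP; exists j; rewrite eqxx Hne.
move: H; rewrite /dist; case: pselect => [H'|/(_ ex)//].
case: (ex_minnP H') => m _ Hmin.
have Hd : diff_at x y `|j|%N by apply/asboolP; exists j; rewrite eqxx Hne.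
by rewrite ltNge pow_le // (leq_trans (Hmin _ Hd) Hj).
Qed.

Lemma dist_le_agree K (x y : config A) : dist R x y <= 2 ^- K.+1 -> agree K x y.
Proof.
move=> H j Hj; case: (eqVneq (x j) (y j)) => // Hne; exfalso.
have ex : exists n, diff_at x y n.
  by exists `|j|%N; apply/asboolP; exists j; rewrite eqxx Hne.
move: H; rewrite /dist; case: pselect => [H'|/(_ ex)//].
case: (ex_minnP H') => m _ Hmin.
have Hd : diff_at x y `|j|%N by apply/asboolP; exists j; rewrite eqxx Hne.
by rewrite leNgt pow_lt // ltnS (leq_trans (Hmin _ Hd) Hj).
Qed.

Lemma agree_dist_le K (x y : config A) : agree K x y -> dist R x y <= 2 ^- K.+1.
Proof.
move=> H; rewrite /dist; case: pselect => [H'|_]; last exact: ltW (pow_gt0 _).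
case: (ex_minnP H') => m /asboolP [j /andP [/eqP Hj Hne]] _.
apply: pow_le; rewrite ltnNge; apply/negP => Hm.
by move: Hne; rewrite H ?eqxx // Hj.
Qed.

Lemma agree_sym K x y : agree K x y -> agree K y x.
Proof. by move=> H j Hj; rewrite H. Qed.

Lemma agree_trans K x y z : agree K x y -> agree K y z -> agree K x z.
Proof. by move=> H1 H2 j Hj; rewrite H1 // H2. Qed.

Lemma seg_eq (x y : config A) p len :
  (forall j : int, p <= j < p + len%:Z -> x j = y j) -> seg x p len = seg y p len.
Proof.
move=> H; rewrite /seg /mkseq; apply/eq_in_map => t; rewrite mem_iota add0n.
move=> /andP[_ Ht]; apply: H; lia.
Qed.

Lemma seg_eqP (x y : config A) p len :
  seg x p len = seg y p len -> forall j : int, p <= j < p + len%:Z -> x j = y j.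
Proof.
move=> E j Hj; pose t := `|j - p|%N.
have Ht : j = p + t%:Z by rewrite /t; lia.
have Htl : (t < len)%N by rewrite /t; lia.
have := congr1 (fun s => nth point s t) E; rewrite /seg !nth_mkseq //.
by rewrite -Ht.
Qed.

End Basics.

Section Dyn.
Variables (A : pointedType) (R : realType).
Variables (X : set (config A)) (F : config A -> config A) (r : nat).
Hypothesis hX : subshift R X.
Hypothesis hF : cellular_automaton R X F.
Variable f : seq A -> A.
Hypothesis hf : forall x, X x -> forall i : int, F x i = f (seg x (i - r%:Z) (2 * r).+1).

Local Notation shift := (@Defs.shift A).

Definition tr (p : int) (x : config A) : config A := fun j => x (j + p).

Lemma shiftX x : X x -> X (shift x).
Proof. by move=> Xx; rewrite -hX.2; exists x. Qed.

Lemma shift_inj : injective shift.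
Proof.
move=> x y E; apply/funext => j; have := congr1 (fun z => z (j - 1)) E.
by rewrite /shift subrK.
Qed.

Lemma shiftXV x : X (shift x) -> X x.
Proof. by rewrite -{1}hX.2 => -[z Xz /shift_inj <-]. Qed.

Lemma tr0 x : tr 0 x = x.
Proof. by apply/funext => j; rewrite /tr addr0. Qed.

Lemma trS (n : nat) x : tr n.+1%:Z x = shift (tr n%:Z x).
Proof. by apply/funext => j; rewrite /tr /shift; congr x; lia. Qed.

Lemma trN (n : nat) x : shift (tr (- n.+1%:Z) x) = tr (- n%:Z) x.
Proof. by apply/funext => j; rewrite /tr /shift; congr x; lia. Qed.

Lemma int_cases (p : int) : exists n : nat, p = n%:Z \/ p = - n%:Z.
Proof. by exists `|p|%N; lia. Qed.

Lemma trX p x : X x -> X (tr p x).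
Proof.
move=> Xx; have H : forall n : nat, X (tr n%:Z x) /\ X (tr (- n%:Z) x).
  elim=> [|n [IH1 IH2]]; first by rewrite oppr0 tr0.
  by split; [rewrite trS; apply: shiftX | apply: shiftXV; rewrite trN].
by have [n [->|->]] := int_cases p; case: (H n).
Qed.

Lemma FX x : X x -> X (F x).
Proof. by case: hF => H _ _; apply: H. Qed.

Lemma F_shift x : X x -> F (shift x) = shift (F x).
Proof. by case: hF => _ _; apply. Qed.

Lemma F_tr p x : X x -> F (tr p x) = tr p (F x).
Proof.
move=> Xx; have H : forall n : nat, F (tr n%:Z x) = tr n%:Z (F x) /\
                                     F (tr (- n%:Z) x) = tr (- n%:Z) (F x).
  elim=> [|n [IH1 IH2]]; first by rewrite oppr0 !tr0.
  split; first by rewrite !trS F_shift ?IH1 //; apply: trX.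
  apply: shift_inj; rewrite -F_shift; last exact: trX.
  by rewrite !trN IH2.
by have [n [->|->]] := int_cases p; case: (H n).
Qed.

Lemma FnX n x : X x -> X (iter n F x).
Proof. by move=> Xx; elim: n => //= n IH; apply: FX. Qed.

Lemma Fn_tr n p x : X x -> iter n F (tr p x) = tr p (iter n F x).
Proof.
move=> Xx; elim: n => //= n ->; rewrite F_tr //; exact: FnX.
Qed.

Lemma seg_tr p x a len : seg (tr p x) a len = seg x (a + p) len.
Proof. by apply: eq_mkseq => j; rewrite /tr; congr x; lia. Qed.

Lemma seg_shift x a len : seg (shift x) a len = seg x (a + 1) len.
Proof. by apply: eq_mkseq => j; rewrite /shift; congr x; lia. Qed.

Lemma Flocal u w (j : int) : X u -> X w ->
  agreeI (j - r%:Z) (j + r%:Z) u w -> F u j = F w j.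
Proof.
move=> Xu Xw H; rewrite (hf Xu) (hf Xw); congr f; apply: seg_eq => t Ht.
apply: H; lia.
Qed.


Section Block.
Variables (B : seq A) (k i : nat) (v : nat -> seq A).
Hypothesis hri : (r <= (2 * i).+1)%N.
Hypothesis hv : forall x, X x -> seg x (- k%:Z) (2 * k).+1 = B ->
      forall n, (1 <= n)%N -> seg (iter n F x) (- i%:Z) (2 * i).+1 = v n.

Definition occ (x : config A) (p : int) := seg x (p - k%:Z) (2 * k).+1 = B.

Lemma wall x p n : X x -> occ x p -> (1 <= n)%N ->
  seg (iter n F x) (p - i%:Z) (2 * i).+1 = v n.
Proof.
move=> Xx Ho Hn; have := hv (trX p Xx) _ Hn.
rewrite seg_tr Fn_tr // seg_tr => H.
by rewrite -H addrC.
Qed.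

Lemma walls x y p q : X x -> X y -> occ x p -> occ x q -> p <= q ->
  agreeI (p - (k + r)%:Z) (q + (k + r)%:Z) x y ->
  forall n, (1 <= n)%N -> agreeI (p - i%:Z) (q + i%:Z) (iter n F x) (iter n F y).
Proof.
move=> Xx Xy Hp Hq pq Hxy.
have occy : forall s, s = p \/ s = q -> occ x s -> occ y s.
  move=> s Hs Ho; rewrite /occ -Ho; apply: seg_eq => j Hj.
  by rewrite Hxy //; lia.
have Hyp := occy p (or_introl erefl) Hp.
have Hyq := occy q (or_intror erefl) Hq.
elim=> [//|n IH] _ j Hj.
have [Hjp|Hjp] := lerP j (p + i%:Z).
  apply: (@seg_eqP _ _ _ (p - i%:Z) (2 * i).+1); last by lia.
  by rewrite !wall.
have [Hjq|Hjq] := lerP (q - i%:Z) j.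
  apply: (@seg_eqP _ _ _ (q - i%:Z) (2 * i).+1); last by lia.
  by rewrite !wall.
rewrite !iterS; apply: Flocal; try exact: FnX.
move=> t Ht; case: n IH => [_|n IH].
  by apply: Hxy; lia.
by apply: IH => //; lia.
Qed.

Lemma eq_of_occ x : X x -> (forall N : int, exists p, N <= p /\ occ x p) ->
  (forall N : int, exists p, p <= N /\ occ x p) -> equicontinuity_point R X F x.
Proof.
move=> Xx Hpos Hneg; split => // eps e0.
have [m Hm] := small_pow e0.
have [q [Hq Oq]] := Hpos m%:Z.
have [p [Hp Op]] := Hneg (- m%:Z).
pose K := (`|p| + `|q| + k + r)%N.
exists (2 ^- K.+1); first exact: pow_gt0.
move=> y Xy /dist_le_agree Hxy n Hn.
have pq : p <= q by lia.
have Hxy' : agreeI (p - (k + r)%:Z) (q + (k + r)%:Z) x y.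
  by move=> j Hj; apply: Hxy; rewrite /K; lia.
have W := walls Xx Xy Op Oq pq Hxy' Hn.
apply: (le_trans (@agree_dist_le _ _ m _ _ _)).
  by move=> j Hj; apply: W; lia.
by apply: le_trans Hm; apply: pow_le; exact: leqnSn.
Qed.

End Block.

End Dyn.

Section Meas.
Variables (A : pointedType) (R : realType).
Local Notation T := (borel_space A R).
Local Notation shift := (@Defs.shift A).

Lemma open_meas (S : set (config A)) : d_open R S -> measurable (S : set T).
Proof. by move=> H; apply: sub_gen_smallest. Qed.

Lemma local_open K (S : set (config A)) :
  (forall x y, agree K x y -> S x -> S y) -> d_open R S.
Proof.
move=> H x Sx; exists (2 ^- K); first exact: pow_gt0.
by move=> y /dist_lt_agree Hxy; apply: H Hxy Sx.
Qed.

Lemma local_meas K (S : set (config A)) :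
  (forall x y, agree K x y -> S x -> S y) -> measurable (S : set T).
Proof. by move=> H; apply: open_meas; apply: local_open H. Qed.

Lemma closed_meas (X : set (config A)) : d_closed R X -> measurable (X : set T).
Proof.
move=> H; rewrite -[X]setCK; apply: measurableC; exact: open_meas.
Qed.

Lemma seg_meas (a : int) (u : seq A) :
  measurable ([set x | seg x a (size u) = u] : set T).
Proof.
apply: (@local_meas (`|a| + size u)%N) => x y Hxy /= Hx.
by rewrite -{2}Hx; apply: seg_eq => j Hj; rewrite Hxy //; lia.
Qed.

Variable mu : {measure set T -> \bar R}.
Hypothesis hT : mu setT = 1%E.
Hypothesis hinv : forall E : set T, measurable E -> mu (shift @^-1` E) = mu E.

Lemma mu_shift_const (Vf : int -> set T) :
  (forall N, measurable (Vf N)) ->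
  (forall N, shift @^-1` (Vf N) = Vf (N + 1)) ->
  forall N, mu (Vf N) = mu (Vf 0).
Proof.
move=> Hm Hs; have H1 : forall N, mu (Vf (N + 1)) = mu (Vf N).
  by move=> N; rewrite -Hs hinv.
have H : forall n : nat, mu (Vf n%:Z) = mu (Vf 0) /\ mu (Vf (- n%:Z)) = mu (Vf 0).
  elim=> [|n [IH1 IH2]]; first by rewrite oppr0.
  split.
    have -> : (n.+1)%:Z = n%:Z + 1 by lia.
    by rewrite H1.
  have E : - (n%:Z) = - (n.+1%:Z) + 1 by lia.
  by rewrite -IH2 E H1.
by move=> N; have [n [->|->]] := int_cases N; case: (H n).
Qed.

Lemma mu_le1 (E : set T) : measurable E -> (mu E <= 1)%E.
Proof. by move=> mE; rewrite -hT le_measure ?inE. Qed.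

Lemma full_inter (E1 E2 : set T) : measurable E1 -> measurable E2 ->
  mu E1 = 1%E -> mu E2 = 1%E -> mu (E1 `&` E2) = 1%E.
Proof.
move=> m1 m2 h1 h2.
have C0 : forall E : set T, measurable E -> mu E = 1%E -> mu (~` E) = 0%E.
  move=> E mE hE; have := measureDI mu (@measurableT _ T) mE.
  rewrite setTD setTI => H0.
  have : mu setT = (mu (~` E) + mu E)%E := H0.
  rewrite hT hE.
  have := mu_le1 (measurableC mE); have := measure_ge0 mu (~` E).
  case: (mu (~` E)) => [e| |] //; rewrite ?lee_fin => e0 e1.
  rewrite -EFinD => -[] H; congr EFin; lra.
have mI := measurableI _ _ m1 m2.
have N : mu (~` (E1 `&` E2)) = 0%E.
  rewrite setCI; apply: null_set_setU; try exact: measurableC.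
    exact: C0.
  exact: C0.
have := measureDI mu (@measurableT _ T) mI.
rewrite setTD setTI => H0.
have : mu setT = (mu (~` (E1 `&` E2)) + mu (E1 `&` E2))%E := H0.
by rewrite hT N add0e.
Qed.

Lemma decr_full (Wf : nat -> set T) c : (forall n, measurable (Wf n)) ->
  (forall n m, (n <= m)%N -> Wf m `<=` Wf n) -> (forall n, mu (Wf n) = c) ->
  mu (\bigcap_n Wf n) = c.
Proof.
move=> Hm Hd Hc.
have mI : measurable (\bigcap_n Wf n) by apply: bigcapT_measurable.
have fin : (mu (Wf 0%N) < +oo)%E.
  by apply: (le_lt_trans (mu_le1 (Hm 0%N))); exact: ltey.
have := nonincreasing_cvg_mu fin Hm mI.
have -> : mu \o Wf = fun _ => c by apply/funext => n /=; rewrite Hc.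
have ndec : nonincreasing_seq Wf by move=> n m nm; apply/subsetPset; exact: Hd.
move=> /(_ ndec) H.
have := @cvg_unique _ (@ereal_hausdorff R) _ _ _ _ (cvg_cst c) H.
by move=> ->.
Qed.

End Meas.

Section EQ.
Variables (A : pointedType) (R : realType).
Variables (X : set (config A)) (F : config A -> config A).
Local Notation T := (borel_space A R).

Definition Gset (m K : nat) : set (config A) :=
  [set x | exists z, X z /\ agree K x z /\ forall y, X y -> agree K z y ->
     forall n, (0 < n)%N -> agree m (iter n F z) (iter n F y)].

Lemma EQ_char : [set x | equicontinuity_point R X F x] =
  X `&` \bigcap_m \bigcup_K Gset m K.
Proof.
apply/seteqP; split => x.
  move=> [Xx Heq]; split => // m _.
  have [eta e0 He] := Heq (2 ^- m.+1) (pow_gt0 R _).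
  have [K HK] := small_pow e0.
  exists K => //; exists x; split => //; split; first by move=> j.
  move=> y Xy Hxy n Hn; apply: dist_le_agree; apply: He => //.
  apply: (le_trans (@agree_dist_le _ R _ _ _ Hxy)); apply: le_trans HK.
  exact/pow_le/leqnSn.
move=> [Xx Hc]; split => // eps e0.
have [m Hm] := small_pow e0.
have [K _ [z [Xz [Hxz Hz]]]] := Hc m I.
exists (2 ^- K.+1); first exact: pow_gt0.
move=> y Xy /dist_le_agree Hxy n Hn.
have H1 := Hz y Xy (agree_trans (agree_sym Hxz) Hxy) n Hn.
have H2 := Hz x Xx (agree_sym Hxz) n Hn.
apply: (le_trans (@agree_dist_le _ R _ _ _ (agree_trans (agree_sym H2) H1))).
by apply: le_trans Hm; exact/pow_le/leqnSn.
Qed.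

Lemma EQ_meas : d_closed R X ->
  measurable ([set x | equicontinuity_point R X F x] : set T).
Proof.
move=> cX; rewrite EQ_char; apply: measurableI; first exact: closed_meas.
apply: bigcapT_measurable => m; apply: bigcupT_measurable => K.
apply: (@local_meas _ _ K) => x y Hxy [z [Xz [Hxz Hz]]].
by exists z; split => //; split => //; apply: agree_trans (agree_sym Hxy) Hxz.
Qed.

End EQ.

Section Dir12.
Variables (A : pointedType) (R : realType).
Local Notation T := (borel_space A R).
Local Notation shift := (@Defs.shift A).
Variables (X : set (config A)) (F : config A -> config A) (r : nat).
Hypothesis hX : subshift R X.
Hypothesis hF : cellular_automaton R X F.
Variable f : seq A -> A.
Hypothesis hf : forall x, X x -> forall i : int, F x i = f (seg x (i - r%:Z) (2 * r).+1).
Variable mu : {measure set T -> \bar R}.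
Hypothesis herg : ergodic_prob_on X mu.

Variables (B : seq A) (k i : nat) (v : nat -> seq A).
Hypothesis hsz : size B = (2 * k).+1.
Hypothesis hri : (r <= (2 * i).+1)%N.
Hypothesis hv : forall x, X x -> seg x (- k%:Z) (2 * k).+1 = B ->
      forall n, (1 <= n)%N -> seg (iter n F x) (- i%:Z) (2 * i).+1 = v n.
Hypothesis hpos : (0 < mu (cylinder X B 0%R))%E.

Let hT : mu setT = 1%E. Proof. by case: herg. Qed.
Let hXm : mu X = 1%E. Proof. by case: herg. Qed.
Let hinv : forall E : set T, measurable E -> mu (shift @^-1` E) = mu E.
Proof. by case: herg. Qed.
Let herg2 : forall E : set T, measurable E -> shift @^-1` E = E ->
         mu E = 0%E \/ mu E = 1%E.
Proof. by case: herg. Qed.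

Let Omeas p : measurable ([set x | occ B k x p] : set T).
Proof. by have := @seg_meas A R (p - k%:Z) B; rewrite hsz. Qed.

Let occ_shift x p : occ B k (shift x) p = occ B k x (p + 1).
Proof. by rewrite /occ seg_shift; congr (seg _ _ _ = _); lia. Qed.

Let cylm : measurable (cylinder X B 0 : set T).
Proof.
have -> : cylinder X B 0 = X `&` [set x | seg x 0 (size B) = B] by [].
by apply: measurableI; [exact: closed_meas hX.1 | exact: seg_meas].
Qed.

Let cyl_occ x : cylinder X B 0 x -> occ B k x k%:Z.
Proof. by move=> [_]; rewrite /occ subrr hsz. Qed.

Definition Vp (N : int) : set T := [set x | exists p, N <= p /\ occ B k x p].
Definition Vn (N : int) : set T := [set x | exists p, p <= N /\ occ B k x p].

Let Vp_meas N : measurable (Vp N).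
Proof.
have -> : Vp N = \bigcup_(n : nat) [set x | occ B k x (N + n%:Z)].
  apply/seteqP; split => x.
    move=> [p [Np Hp]]; exists `|p - N|%N => //=.
    by have -> : N + `|p - N|%N%:Z = p by lia.
  by move=> [n _ Hn]; exists (N + n%:Z); split => //; lia.
by apply: bigcupT_measurable => n; exact: Omeas.
Qed.

Let Vn_meas N : measurable (Vn N).
Proof.
have -> : Vn N = \bigcup_(n : nat) [set x | occ B k x (N - n%:Z)].
  apply/seteqP; split => x.
    move=> [p [Np Hp]]; exists `|N - p|%N => //=.
    by have -> : N - `|N - p|%N%:Z = p by lia.
  by move=> [n _ Hn]; exists (N - n%:Z); split => //; lia.
by apply: bigcupT_measurable => n; exact: Omeas.
Qed.

Let Vp_shift N : shift @^-1` (Vp N) = Vp (N + 1).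
Proof.
apply/seteqP; split => x /=.
  by move=> [p [Np Hp]]; exists (p + 1); rewrite -occ_shift; split => //; lia.
move=> [p [Np Hp]]; exists (p - 1); rewrite occ_shift subrK; split => //; lia.
Qed.

Let Vn_shift N : shift @^-1` (Vn N) = Vn (N + 1).
Proof.
apply/seteqP; split => x /=.
  by move=> [p [Np Hp]]; exists (p + 1); rewrite -occ_shift; split => //; lia.
move=> [p [Np Hp]]; exists (p - 1); rewrite occ_shift subrK; split => //; lia.
Qed.

Definition Pos : set T := [set x | forall N : int, exists p, N <= p /\ occ B k x p].
Definition Neg : set T := [set x | forall N : int, exists p, p <= N /\ occ B k x p].

Let Pos_eq : Pos = \bigcap_(n : nat) Vp n%:Z.
Proof.
apply/seteqP; split => x; first by move=> H n _; exact: H.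
move=> H N; have [p [Np Hp]] := H `|N|%N I; exists p; split => //; lia.
Qed.

Let Neg_eq : Neg = \bigcap_(n : nat) Vn (- n%:Z).
Proof.
apply/seteqP; split => x; first by move=> H n _; exact: H.
move=> H N; have [p [Np Hp]] := H `|N|%N I; exists p; split => //; lia.
Qed.

Let Pos_meas : measurable Pos.
Proof. by rewrite Pos_eq; apply: bigcapT_measurable. Qed.

Let Neg_meas : measurable Neg.
Proof. by rewrite Neg_eq; apply: bigcapT_measurable. Qed.

Let Pos_inv : shift @^-1` Pos = Pos.
Proof.
apply/seteqP; split => x /= H N.
  have [p [Np Hp]] := H (N - 1); exists (p + 1); rewrite -occ_shift.
  by split => //; lia.
have [p [Np Hp]] := H (N + 1); exists (p - 1); rewrite occ_shift subrK.
by split => //; lia.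
Qed.

Let Neg_inv : shift @^-1` Neg = Neg.
Proof.
apply/seteqP; split => x /= H N.
  have [p [Np Hp]] := H (N - 1); exists (p + 1); rewrite -occ_shift.
  by split => //; lia.
have [p [Np Hp]] := H (N + 1); exists (p - 1); rewrite occ_shift subrK.
by split => //; lia.
Qed.

Let Pos_full : mu Pos = 1%E.
Proof.
have Hc := mu_shift_const hinv Vp_meas Vp_shift.
have H : mu Pos = mu (Vp 0).
  rewrite Pos_eq; apply: (decr_full hT) => // n m nm x [p [Np Hp]].
  by exists p; split => //; lia.
have pos : (0 < mu Pos)%E.
  rewrite H -(Hc k%:Z); apply: (lt_le_trans hpos); rewrite le_measure ?inE //.
  by move=> x /cyl_occ Hx; exists k%:Z.
by case: (herg2 Pos_meas Pos_inv) => // H0; move: pos; rewrite H0 ltxx.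
Qed.

Let Neg_full : mu Neg = 1%E.
Proof.
have Hc := mu_shift_const hinv Vn_meas Vn_shift.
have H : mu Neg = mu (Vn 0).
  rewrite Neg_eq; apply: (decr_full hT).
  - by move=> n; exact: Vn_meas.
  - by move=> n m nm x [p [Np Hp]]; exists p; split => //; lia.
  - by move=> n; exact: Hc.
have pos : (0 < mu Neg)%E.
  rewrite H -(Hc k%:Z); apply: (lt_le_trans hpos); rewrite le_measure ?inE //.
  by move=> x /cyl_occ Hx; exists k%:Z.
by case: (herg2 Neg_meas Neg_inv) => // H0; move: pos; rewrite H0 ltxx.
Qed.

Lemma dir12 : mu_equicontinuous X F mu.
Proof.
have mEQ := @EQ_meas A R X F hX.1.
split => //.
have mX : measurable (X : set T) by exact: closed_meas hX.1.
have W1 := full_inter hT mX (measurableI _ _ Pos_meas Neg_meas) hXm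
  (full_inter hT Pos_meas Neg_meas Pos_full Neg_full).
apply/le_anti/andP; split; first exact: mu_le1.
rewrite -W1 le_measure ?inE //; first by apply: measurableI => //; apply: measurableI.
move=> x [Xx [Px Nx]].
exact: (eq_of_occ hX hF hf hri hv Xx Px Nx).
Qed.

End Dir12.

Section Dir21.
Variables (A : pointedType) (R : realType).
Local Notation T := (borel_space A R).
Local Notation shift := (@Defs.shift A).
Variable finA : finite_set [set: A].
Variables (X : set (config A)) (F : config A -> config A) (r : nat).
Hypothesis hX : subshift R X.
Variable mu : {measure set T -> \bar R}.
Hypothesis herg : ergodic_prob_on X mu.

Let hinv : forall E : set T, measurable E -> mu (shift @^-1` E) = mu E.
Proof. by case: herg. Qed.

Let inj_ex : exists fA : A -> nat, injective fA.
Proof.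
have /pcard_leTP H := finite_set_countable finA.
have [fA hA] := (injPex (A := [set: A]) (U := nat)).1 H.
by exists fA => a b E; apply: hA; rewrite ?in_setT.
Qed.

Definition cyl (a : int) (u : seq A) : set T :=
  [set x | X x /\ seg x a (size u) = u].

Let cyl_meas a u : measurable (cyl a u).
Proof.
have -> : cyl a u = X `&` [set x | seg x a (size u) = u] by [].
by apply: measurableI; [exact: closed_meas hX.1 | exact: seg_meas].
Qed.

Let cyl_shift u a : shift @^-1` (cyl a u) = cyl (a + 1) u.
Proof.
apply/seteqP; split => x; rewrite /cyl /preimage /= seg_shift.
  by move=> [/(shiftXV hX) Xx H].
by move=> [Xx H]; split => //; exact: (shiftX hX).
Qed.

Let cyl_const u a : mu (cyl a u) = mu (cylinder X u 0).
Proof.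
exact: (mu_shift_const hinv (fun N => cyl_meas N u) (cyl_shift u)).
Qed.

Lemma dir21 : mu_equicontinuous X F mu ->
  exists B : seq A, blocking_word X F r B /\ (0 < mu (cylinder X B 0%R))%E.
Proof.
move=> [mEQ EQ1]; apply: contrapT => Hno.
have Hz : forall B, blocking_word X F r B -> mu (cylinder X B 0) = 0%E.
  move=> B bB; apply/eqP; rewrite eq_le measure_ge0 andbT leNgt.
  by apply/negP => H; apply: Hno; exists B.
have [fA injA] := inj_ex.
pose code (s : seq A) := CodeSeq.code (map fA s).
have code_inj : injective code.
  by move=> s t /(can_inj CodeSeq.codeK) /(inj_map injA).
pose Q (n : nat) : set T := [set x | exists B (kk : nat), code B = n /\
   blocking_word X F r B /\ size B = (2 * kk).+1 /\ cyl (- kk%:Z) B x].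
have HQ : forall n, measurable (Q n) /\ mu (Q n) = 0%E.
  move=> n; case: (pselect (exists B (kk : nat), code B = n /\
     blocking_word X F r B /\ size B = (2 * kk).+1)).
    move=> [B0 [k0 [c0 [b0 s0]]]].
    have -> : Q n = cyl (- k0%:Z) B0.
      apply/seteqP; split => x.
        move=> [B [kk [cB [bB [sB Hx]]]]].
        have E : B = B0 by apply: code_inj; rewrite cB c0.
        subst B; have -> : k0 = kk by move: sB; rewrite s0; lia.
        exact: Hx.
      by move=> Hx; exists B0, k0.
    by split => //; rewrite cyl_const; exact: Hz.
  move=> nE; have -> : Q n = set0.
    apply/seteqP; split => x // [B [kk [cB [bB [sB _]]]]].
    by apply: nE; exists B, kk.
  by split => //; rewrite measure0.
have sub : [set x | equicontinuity_point R X F x] `<=` \bigcup_n Q n.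
  move=> x [Xx Heq].
  have [eta e0 He] := Heq (2 ^- r.+1) (pow_gt0 R _).
  have [K HK] := small_pow e0.
  pose B := seg x (- K%:Z) (2 * K).+1.
  have sB : size B = (2 * K).+1 by rewrite size_mkseq.
  exists (code B) => //; exists B, K; split => //; split; last first.
    by split => //; split => //; rewrite sB.
  exists K; split => //; exists r; split; first by lia.
  exists (fun n => seg (iter n F x) (- r%:Z) (2 * r).+1); split.
    by move=> n _; rewrite size_mkseq.
  move=> y Xy Hy n Hn.
  have Hxy : agree K x y.
    move=> j Hj; apply: (@seg_eqP _ x y (- K%:Z) (2 * K).+1); last by lia.
    by rewrite Hy.
  have Hd : dist R x y <= eta.
    apply: (le_trans (@agree_dist_le _ R _ _ _ Hxy)); apply: le_trans HK.
    exact/pow_le/leqnSn.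
  have := dist_le_agree (He y Xy Hd n Hn) => Hag.
  by apply: seg_eq => j Hj; rewrite Hag //; lia.
have := measure_sigma_subadditive mu (fun n => (HQ n).1) mEQ sub.
rewrite EQ1 eseries0; last by move=> n _ _; exact: (HQ n).2.
by rewrite lee_fin ler10.
Qed.

End Dir21.

Theorem mainTheorem3 (R : realType) (A : pointedType)
  (finA : finite_set [set: A])
  (X : set (config A)) (F : config A -> config A) (r : nat)
  (mu : {measure set (borel_space A R) -> \bar R}) :
  subshift R X ->
  cellular_automaton R X F ->
  is_radius X F r ->
  ergodic_prob_on X mu ->
  (exists B : seq A, blocking_word X F r B /\
     (0 < mu (cylinder X B 0%R))%E) <->
  mu_equicontinuous X F mu.
Proof.
move=> hX hF [f hf] herg; split; last exact: (dir21 finA r hX herg).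
move=> [B [[k [hsz [i [hri [v [_ hv]]]]]] hpos]].
exact: (dir12 hX hF hf herg hsz hri hv hpos).
Qed.
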